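(* Consider $\min_{x\in\mathbb{R}^n}\max_{y\in\mathbb{R}^m}f(x,y)$ with $f$ twice differentiable at $(\bar x,\bar y)$. (a) If $\nabla f(\bar x,\bar y)=0$, $\nabla^2_{yy}f(\bar x,\bar y)\prec0$, and for every $u\in\mathbb{R}^n\setminus\{0\}$ there exists $h\in\mathbb{R}^m$ with $\nabla^2f(\bar x,\bar y)((u,h),(u,h))>0$, then $(\bar x,\bar y)$ is a calm local minimax point. (b) If $(\bar x,\bar y)$ is a calm local minimax point, then $\nabla f(\bar x,\bar y)=0$, $\nabla^2_{yy}f(\bar x,\bar y)\preceq0$, and for every $u\in\mathbb{R}^n$ there exists $h\in\mathbb{R}^m$ with $\nabla^2f(\bar x,\bar y)((u,h),(u,h))\ge0$.
   Context: $f:\mathbb{R}^n\times\mathbb{R}^m\to\mathbb{R}$; $\nabla^2f(\bar x,\bar y)((u,h),(u,h))$ denotes the quadratic form of the full Hessian of $f$ at $(\bar x,\bar y)$ applied to $(u,h)$. Standing assumption: for every $x$, $\bar y$ and $\epsilon\ge0$ the maximum of $f(x,\cdot)$ over $\mathbb{B}_\epsilon(\bar y)$ is attained, where $\mathbb{B}_\epsilon(z)$ is the closed Euclidean ball. A radius function is $\tau:[0,\infty)\to[0,\infty)$ with $\tau(0)=0$, $\tau(\delta)\to0$ as $\delta\downarrow0$; calm at $0$ if $\tau(\delta)\le\kappa\delta$ on $[0,\delta_1]$ for some $\kappa,\delta_1>0$. $(\bar x,\bar y)$ is a calm local minimax point if there exist $\delta_0>0$ and a radius function $\tau$ calm at $0$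 with $f(\bar x,y)\le f(\bar x,\bar y)\le\max_{y'\in\mathbb{B}_{\tau(\delta)}(\bar y)}f(x,y')$ for all $\delta\in(0,\delta_0]$, $x\in\mathbb{B}_\delta(\bar x)$, $y\in\mathbb{B}_\delta(\bar y)$. $A\prec0$ ($\preceq0$) means negative definite (semidefinite). *)

(* Defs.v *)
From HB Require Import structures.
From mathcomp Require Import all_boot all_order all_algebra.
From mathcomp Require Import boolp classical_sets reals.
Set Implicit Arguments. Unset Strict Implicit. Unset Printing Implicit Defensive.
Import Order.TTheory GRing.Theory Num.Theory.
Local Open Scope ring_scope.
Local Open Scope classical_set_scope.

Section Defs.
Variable R : realType.

Definition dotv {k} (u v : 'rV[R]_k) : R := \sum_(i < k) u ord0 i * v ord0 i.
Definition enorm {k} (v : 'rV[R]_k) : R := Num.sqrt (dotv v v).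

Definition cball {k} (c : 'rV[R]_k) (r : R) : set 'rV[R]_k :=
  [set v | enorm (v - c) <= r].

Definition has_grad {k} (F : 'rV[R]_k -> R) (z g : 'rV[R]_k) : Prop :=
  forall eps : R, 0 < eps -> exists2 delta : R, 0 < delta &
    forall w, enorm (w - z) <= delta ->
      `|F w - F z - dotv (w - z) g| <= eps * enorm (w - z).

(* F is twice (Frechet) differentiable at z, with gradient g and Hessian H:
   F is differentiable on a neighbourhood of z with gradient field G,
   G z = g, and G is Frechet differentiable at z with Jacobian H
   (acting on row vectors: G w ~ G z + (w - z) *m H). *)
Definition twice_diff_at {k} (F : 'rV[R]_k -> R) (z g : 'rV[R]_k)
    (H : 'M[R]_k) : Prop :=
  exists G : 'rV[R]_k -> 'rV[R]_k, exists2 r : R, 0 < r &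
    (forall w, enorm (w - z) < r -> has_grad F w (G w)) /\ G z = g /\
    forall eps : R, 0 < eps -> exists2 delta : R, 0 < delta &
      forall w, enorm (w - z) <= delta ->
        enorm (G w - G z - (w - z) *m H) <= eps * enorm (w - z).

Definition qform {k} (A : 'M[R]_k) (v : 'rV[R]_k) : R := (v *m A *m v^T) ord0 ord0.

Definition negdef {k} (A : 'M[R]_k) : Prop := forall h, h != 0 -> qform A h < 0.
Definition negsemidef {k} (A : 'M[R]_k) : Prop := forall h, qform A h <= 0.

(* Standing assumption: for every x, ybar and eps >= 0 the maximum of f(x,.)
   over the closed ball B_eps(ybar) is attained. *)
Definition max_attained {n m} (f : 'rV[R]_n -> 'rV[R]_m -> R) : Prop :=
  forall (x : 'rV[R]_n) (c : 'rV[R]_m) (eps : R), 0 <= eps ->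
    exists2 y0, cball c eps y0 & forall y, cball c eps y -> f x y <= f x y0.

(* max_{y' in B_eps(c)} f(x, y'), written as the supremum of the image
   (it is attained under the standing assumption). *)
Definition ballmax {n m} (f : 'rV[R]_n -> 'rV[R]_m -> R) (x : 'rV[R]_n)
    (c : 'rV[R]_m) (eps : R) : R :=
  sup [set f x y | y in cball c eps].

Definition radius_fun (tau : R -> R) : Prop :=
  [/\ tau 0 = 0, (forall d, 0 <= d -> 0 <= tau d) &
      forall e : R, 0 < e -> exists2 d0 : R, 0 < d0 &
        forall d, 0 < d -> d <= d0 -> tau d <= e].

Definition calm_at0 (tau : R -> R) : Prop :=
  exists kappa : R, exists2 d1 : R, 0 < kappa /\ 0 < d1 &
    forall d, 0 <= d -> d <= d1 -> tau d <= kappa * d.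

Definition calm_local_minimax {n m} (f : 'rV[R]_n -> 'rV[R]_m -> R)
    (xb : 'rV[R]_n) (yb : 'rV[R]_m) : Prop :=
  exists2 d0 : R, 0 < d0 & exists tau : R -> R,
    [/\ radius_fun tau, calm_at0 tau &
      forall d : R, 0 < d -> d <= d0 ->
        forall x y, cball xb d x -> cball yb d y ->
          f xb y <= f xb yb /\ f xb yb <= ballmax f x yb (tau d)].

End Defs.

(* Main.v *)
Require Import Defs.
From HB Require Import structures.
From mathcomp Require Import all_boot all_order all_algebra.
From mathcomp Require Import boolp classical_sets reals.
From mathcomp Require Import all_classical all_reals all_analysis.
From mathcomp Require Import ring lra.
Import Order.TTheory GRing.Theory Num.Theory.
Import numFieldTopology.Exports numFieldNormedType.Exports.
Local Open Scope ring_scope.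
Local Open Scope classical_set_scope.
Set Implicit Arguments. Unset Strict Implicit. Unset Printing Implicit Defensive.

Section Alg.
Variable R : realType.

Lemma dotvC k (u v : 'rV[R]_k) : dotv u v = dotv v u.
Proof. by rewrite /dotv; apply: eq_bigr => i _; rewrite mulrC. Qed.

Lemma dotvDl k (u w v : 'rV[R]_k) : dotv (u + w) v = dotv u v + dotv w v.
Proof. by rewrite /dotv -big_split; apply: eq_bigr => i _; rewrite mxE mulrDl. Qed.

Lemma dotvZl k (a : R) (u v : 'rV[R]_k) : dotv (a *: u) v = a * dotv u v.
Proof. by rewrite /dotv mulr_sumr; apply: eq_bigr => i _; rewrite mxE mulrA. Qed.

Lemma dotvNl k (u v : 'rV[R]_k) : dotv (- u) v = - dotv u v.
Proof. by rewrite -scaleN1r dotvZl mulN1r. Qed.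

Lemma dotvBl k (u w v : 'rV[R]_k) : dotv (u - w) v = dotv u v - dotv w v.
Proof. by rewrite dotvDl dotvNl. Qed.

Lemma dotv0l k (v : 'rV[R]_k) : dotv 0 v = 0.
Proof. by rewrite /dotv big1 // => i _; rewrite mxE mul0r. Qed.

Lemma dotvDr k (u w v : 'rV[R]_k) : dotv v (u + w) = dotv v u + dotv v w.
Proof. by rewrite !(dotvC v) dotvDl. Qed.
Lemma dotvZr k (a : R) (u v : 'rV[R]_k) : dotv v (a *: u) = a * dotv v u.
Proof. by rewrite !(dotvC v) dotvZl. Qed.
Lemma dotvNr k (u v : 'rV[R]_k) : dotv v (- u) = - dotv v u.
Proof. by rewrite !(dotvC v) dotvNl. Qed.
Lemma dotvBr k (u w v : 'rV[R]_k) : dotv v (u - w) = dotv v u - dotv v w.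
Proof. by rewrite !(dotvC v) dotvBl. Qed.
Lemma dotv0r k (v : 'rV[R]_k) : dotv v 0 = 0.
Proof. by rewrite dotvC dotv0l. Qed.

Lemma dotv_ge0 k (v : 'rV[R]_k) : 0 <= dotv v v.
Proof. by apply: sumr_ge0 => i _; rewrite -expr2 sqr_ge0. Qed.

Lemma dotv_eq0 k (v : 'rV[R]_k) : dotv v v = 0 -> v = 0.
Proof.
move=> h; apply/rowP => i; rewrite mxE.
have hp : forall i : 'I_k, true -> 0 <= v ord0 i * v ord0 i by move=> j _; rewrite -expr2 sqr_ge0.
move: (psumr_eq0P hp h (i:=i) isT) => /eqP.
by rewrite -expr2 sqrf_eq0 => /eqP.
Qed.

Lemma enorm_ge0 k (v : 'rV[R]_k) : 0 <= enorm v.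
Proof. exact: sqrtr_ge0. Qed.

Lemma enorm_sq k (v : 'rV[R]_k) : enorm v ^+ 2 = dotv v v.
Proof. by rewrite /enorm sqr_sqrtr // dotv_ge0. Qed.

Lemma enorm_eq0 k (v : 'rV[R]_k) : enorm v = 0 -> v = 0.
Proof. by move=> h; apply: dotv_eq0; rewrite -enorm_sq h expr0n. Qed.

Lemma enorm0 k : enorm (0 : 'rV[R]_k) = 0.
Proof. by rewrite /enorm dotv0l sqrtr0. Qed.

Lemma enormZ k (a : R) (v : 'rV[R]_k) : enorm (a *: v) = `|a| * enorm v.
Proof.
rewrite /enorm dotvZl dotvZr mulrA -expr2 sqrtrM ?sqr_ge0 // sqrtr_sqr //.
Qed.

Lemma enormN k (v : 'rV[R]_k) : enorm (- v) = enorm v.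
Proof. by rewrite -scaleN1r enormZ normrN1 mul1r. Qed.

Lemma enormB k (u v : 'rV[R]_k) : enorm (u - v) = enorm (v - u).
Proof. by rewrite -enormN opprB. Qed.

Lemma le_enorm k (a : R) (v : 'rV[R]_k) : 0 <= a -> dotv v v <= a ^+ 2 -> enorm v <= a.
Proof. by move=> a0 h; rewrite /enorm -(ger0_norm a0) -sqrtr_sqr ler_sqrt ?sqr_ge0 // ger0_norm. Qed.

Lemma CS k (u v : 'rV[R]_k) : `|dotv u v| <= enorm u * enorm v.
Proof.
have amgm : forall l : R, 0 < l -> 2 * `|dotv u v| <= l * dotv u u + l^-1 * dotv v v.
  move=> l l0.
  have t : forall i, 2 * `|u ord0 i * v ord0 i| <= l * (u ord0 i * u ord0 i) + l^-1 * (v ord0 i * v ord0 i).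
    move=> i.
    have hl : l * (u ord0 i * u ord0 i) + l^-1 * (v ord0 i * v ord0 i)
          - 2 * `|u ord0 i * v ord0 i| = l^-1 * (l * `|u ord0 i| - `|v ord0 i|) ^+ 2.
      have ln0 : l != 0 by rewrite gt_eqF.
      have e1 : forall x : R, x * x = `|x| * `|x| by move=> x; rewrite -normrM ger0_norm // -expr2 sqr_ge0.
      rewrite (e1 (u ord0 i)) (e1 (v ord0 i)) normrM.
      by field.
    by rewrite -subr_ge0 hl; apply: mulr_ge0; [rewrite invr_ge0 ltW | exact: sqr_ge0].
  apply: (@le_trans _ _ (2 * \sum_i `|u ord0 i * v ord0 i|)).
    by rewrite ler_pM2l // ler_norm_sum.
  rewrite /dotv mulr_sumr.
  rewrite !mulr_sumr -big_split; apply: ler_sum => i _; exact: t.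
have [u0|un0] := eqVneq (enorm u) 0.
  by rewrite (enorm_eq0 u0) dotv0l normr0 enorm0 mul0r.
have [v0|vn0] := eqVneq (enorm v) 0.
  by rewrite (enorm_eq0 v0) dotv0r normr0 enorm0 mulr0.
have up : 0 < enorm u by rewrite lt_def un0 enorm_ge0.
have vp : 0 < enorm v by rewrite lt_def vn0 enorm_ge0.
have := amgm (enorm v / enorm u) (divr_gt0 vp up).
rewrite -!enorm_sq invf_div => h.
have e : enorm v / enorm u * enorm u ^+ 2 + enorm u / enorm v * enorm v ^+ 2
   = 2 * (enorm u * enorm v) by field; rewrite ?un0 ?vn0.
rewrite e in h; by rewrite -(ler_pM2l (ltr0Sn _ 1)).
Qed.

Lemma enormD k (u v : 'rV[R]_k) : enorm (u + v) <= enorm u + enorm v.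
Proof.
apply: le_enorm; first by rewrite addr_ge0 ?enorm_ge0.
rewrite dotvDl !dotvDr sqrrD -!enorm_sq (dotvC v u).
have := CS u v => /(le_trans (ler_norm _)) => h; lra.
Qed.

Lemma coord_le k (v : 'rV[R]_k) i : `|v ord0 i| <= enorm v.
Proof.
rewrite -(sqrtr_sqr (v ord0 i)) /enorm ler_sqrt; last exact: dotv_ge0.
rewrite /dotv (bigD1 i) //= -expr2 lerDl; apply: sumr_ge0 => j _; rewrite -expr2; exact: sqr_ge0.
Qed.

Lemma dotv_row_mx n m (a c : 'rV[R]_n) (b d : 'rV[R]_m) :
  dotv (row_mx a b) (row_mx c d) = dotv a c + dotv b d.
Proof.
rewrite /dotv big_split_ord /=; congr (_ + _); apply: eq_bigr => i _;
by rewrite ?row_mxEl ?row_mxEr.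
Qed.

Lemma enorm_row_mx n m (a : 'rV[R]_n) (b : 'rV[R]_m) :
  enorm (row_mx a b) <= enorm a + enorm b.
Proof.
have -> : row_mx a b = row_mx a 0 + row_mx 0 b by rewrite add_row_mx addr0 add0r.
apply: le_trans (enormD _ _) _.
by rewrite /enorm !dotv_row_mx !dotv0l addr0 add0r.
Qed.

Lemma enorm_row0 n m (b : 'rV[R]_m) : enorm (row_mx (0 : 'rV[R]_n) b) = enorm b.
Proof. by rewrite /enorm dotv_row_mx dotv0l add0r. Qed.

Lemma enorm_row_ge n m (a : 'rV[R]_n) (b : 'rV[R]_m) : enorm a <= enorm (row_mx a b).
Proof.
rewrite /enorm ler_sqrt ?dotv_row_mx; last by rewrite addr_ge0 ?dotv_ge0.
by rewrite lerDl dotv_ge0.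
Qed.

Lemma qform_dot k (A : 'M[R]_k) v : qform A v = dotv (v *m A) v.
Proof. by rewrite /qform /dotv mxE; apply: eq_bigr => i _; rewrite [v^T _ _]mxE. Qed.

Lemma qform_mul k l (A : 'M[R]_k) (N : 'M[R]_(l, k)) u :
  qform A (u *m N) = qform (N *m A *m N^T) u.
Proof. by rewrite /qform trmx_mul !mulmxA. Qed.

Lemma qformZ k (A : 'M[R]_k) (a : R) v : qform A (a *: v) = a ^+ 2 * qform A v.
Proof. by rewrite !qform_dot -scalemxAl dotvZl dotvZr mulrA expr2. Qed.

Lemma qformN k (A : 'M[R]_k) v : qform (- A) v = - qform A v.
Proof. by rewrite !qform_dot mulmxN dotvNl. Qed.

Lemma entryD p q (A B : 'M[R]_(p, q)) i j : (A + B) i j = A i j + B i j.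
Proof. by rewrite mxE. Qed.

Lemma qform_block n m (H : 'M[R]_(n + m)) u h :
  qform H (row_mx u h) = qform (ulsubmx H) u + (u *m ursubmx H *m h^T) ord0 ord0
    + (h *m dlsubmx H *m u^T) ord0 ord0 + qform (drsubmx H) h.
Proof.
have e : row_mx u h *m H *m (row_mx u h)^T = u *m ulsubmx H *m u^T + u *m ursubmx H *m h^T
   + h *m dlsubmx H *m u^T + h *m drsubmx H *m h^T.
  by rewrite -{1}(submxK H) mul_row_block tr_row_mx mul_row_col !mulmxDl addrACA !addrA.
by rewrite /qform e !entryD.
Qed.

Lemma qform_row0 n m (H : 'M[R]_(n + m)) h : qform H (row_mx 0 h) = qform (drsubmx H) h.
Proof. by rewrite qform_block /qform !mul0mx trmx0 mulmx0 !mxE !add0r. Qed.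

Lemma lin_bound k l (M : 'M[R]_(k, l)) : exists2 L, 0 <= L & forall u, enorm (u *m M) <= L * enorm u.
Proof.
exists (\sum_(j < l) \sum_(i < k) `|M i j|).
  by apply: sumr_ge0 => j _; apply: sumr_ge0 => i _.
move=> u; rewrite mulr_suml.
have h1 : forall v : 'rV[R]_l, enorm v <= \sum_j `|v ord0 j|.
  move=> v; apply: le_enorm; first by apply: sumr_ge0.
  rewrite /dotv expr2 mulr_suml; apply: ler_sum => i _.
  apply: (@le_trans _ _ (`|v ord0 i| * `|v ord0 i|)); first by rewrite -normrM ler_norm.
  apply: ler_wpM2l => //; rewrite (bigD1 i) //= lerDl; exact: sumr_ge0.
apply: le_trans (h1 _) _; apply: ler_sum => j _.
rewrite mxE mulr_suml; apply: le_trans (ler_norm_sum _ _ _) _; apply: ler_sum => i _.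
by rewrite normrM mulrC ler_wpM2l ?coord_le.
Qed.

End Alg.

Section Top.
Variable R : realType.

Lemma cont_sum k (I : Type) (s : seq I) (F : I -> 'rV[R]_k -> R) :
  (forall i, continuous (F i)) -> continuous (fun v => \sum_(i <- s) F i v).
Proof.
move=> hF; elim: s => [|a s IH].
  have -> : (fun v : 'rV[R]_k => \sum_(i <- [::]) F i v) = fun=> 0.
    by apply: funext => w; rewrite big_nil.
  by move=> v; exact: cst_continuous.
have -> : (fun v => \sum_(i <- a :: s) F i v) = F a + (fun v => \sum_(i <- s) F i v).
  by apply: funext => w; rewrite big_cons.
by move=> v; apply: continuousD; [exact: hF | exact: IH].
Qed.

Lemma cont_qform k (A : 'M[R]_k) : continuous (qform A).
Proof.
have -> : qform A = fun v => \sum_i (\sum_j v ord0 j * A j i) * v ord0 i.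
  by apply: funext => w; rewrite qform_dot /dotv; apply: eq_bigr => i _; rewrite mxE.
apply: cont_sum => i v; apply: continuousM; last exact: coord_continuous.
by apply: cont_sum => j w; apply: continuousM; [exact: coord_continuous | exact: cst_continuous].
Qed.

Lemma cont_dot k : continuous (fun v : 'rV[R]_k => dotv v v).
Proof.
have -> : (fun v : 'rV[R]_k => dotv v v) = qform 1%:M.
  by apply: funext => w; rewrite qform_dot mulmx1.
exact: cont_qform.
Qed.

Lemma compact_shell k (lo hi : R) :
  compact [set v : 'rV[R]_k | lo <= dotv v v /\ dotv v v <= hi].
Proof.
set B := [set v : 'rV[R]_k | forall i, `[(- (`|hi| + 1)), `|hi| + 1]%classic (v ord0 i)].
have c1 : closed [set v : 'rV[R]_k | lo <= dotv v v /\ dotv v v <= hi].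
  have -> : [set v : 'rV[R]_k | lo <= dotv v v /\ dotv v v <= hi] =
     (fun v => dotv v v) @^-1` [set x | lo <= x] `&` (fun v => dotv v v) @^-1` [set x | x <= hi].
    by apply/seteqP; split => v.
  have ca : closed ((fun v : 'rV[R]_k => dotv v v) @^-1` [set x | lo <= x]).
    have h1 : {in ~` (fun v : 'rV[R]_k => dotv v v) @^-1` [set x | lo <= x], continuous (fun v : 'rV[R]_k => dotv v v)}.
      by move=> v _; exact: cont_dot.
    exact: (preimage_closed h1 (@closed_ge R lo)).
  have cb : closed ((fun v : 'rV[R]_k => dotv v v) @^-1` [set x | x <= hi]).
    have h1 : {in ~` (fun v : 'rV[R]_k => dotv v v) @^-1` [set x | x <= hi], continuous (fun v : 'rV[R]_k => dotv v v)}.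
      by move=> v _; exact: cont_dot.
    exact: (preimage_closed h1 (@closed_le R hi)).
  exact: (closedI ca cb).
have c2 := @rV_compact R k (fun=> `[(- (`|hi| + 1)), `|hi| + 1]%classic) (fun=> @segment_compact R _ _).
have c3 : [set v : 'rV[R]_k | lo <= dotv v v /\ dotv v v <= hi] `<=` [set v | (forall i : 'I_k, `[(- (`|hi| + 1)), `|hi| + 1]%classic (v ord0 i))].
  move=> v [_ vh] i /=; rewrite in_itv /= -ler_norml.
  apply: le_trans (coord_le _ _) _; apply: le_enorm; first by rewrite addr_ge0.
  have := ler_norm hi; nra.
exact: (subclosed_compact c1 c2 c3).
Qed.


Lemma unit_dir k (v : 'rV[R]_k) : v != 0 ->
  dotv ((enorm v)^-1 *: v) ((enorm v)^-1 *: v) = 1 /\ v = enorm v *: ((enorm v)^-1 *: v).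
Proof.
move=> vn0; have en0 : enorm v != 0 by apply/eqP => /enorm_eq0 /eqP; rewrite (negbTE vn0).
split; last by rewrite scalerA divff // scale1r.
by rewrite dotvZl dotvZr -enorm_sq; field.
Qed.

Lemma qform0 k (P : 'M[R]_k) : qform P 0 = 0.
Proof. by rewrite qform_dot mul0mx dotv0l. Qed.

Lemma coercive k (P : 'M[R]_k) : (forall v, v != 0 -> 0 < qform P v) ->
  exists2 c, 0 < c & forall v, c * dotv v v <= qform P v.
Proof.
move=> hP.
case: (pselect (exists v : 'rV[R]_k, dotv v v = 1)) => [[v0 hv0]|hno].
  set S := [set v : 'rV[R]_k | 1 <= dotv v v /\ dotv v v <= 1].
  have S0 : S !=set0 by exists v0; rewrite /S /= hv0 lexx.
  have cS : {within S, continuous (qform P)}.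
    by apply: continuous_subspaceT => v; exact: cont_qform.
  have [c cS' cmin] := EVT_min_rV S0 (@compact_shell k 1 1) cS.
  have hc1 : dotv c c = 1 by move: cS'; rewrite inE /S /= => -[? ?]; apply/eqP; rewrite eq_le; apply/andP.
  have cn0 : c != 0 by apply/eqP => c0; move: hc1; rewrite c0 dotv0l => /eqP; rewrite eq_sym oner_eq0.
  exists (qform P c); first exact: hP.
  move=> v; have [->|vn0] := eqVneq v 0; first by rewrite dotv0l mulr0 qform0.
  have [h1 h2] := unit_dir vn0.
  rewrite [in X in _ <= X]h2 qformZ enorm_sq mulrC ler_wpM2l ?dotv_ge0 //.
  by apply: cmin; rewrite inE /S /= h1 lexx.
exists 1 => // v; have [->|vn0] := eqVneq v 0; first by rewrite dotv0l mulr0 qform0.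
by exfalso; apply: hno; exists ((enorm v)^-1 *: v); case: (unit_dir vn0).
Qed.

Lemma max_ball k (q : 'rV[R]_k -> R) (K : R) : continuous q ->
  exists2 c, dotv c c <= K ^+ 2 & forall t, dotv t t <= K ^+ 2 -> q t <= q c.
Proof.
move=> cq.
set S := [set v : 'rV[R]_k | 0 <= dotv v v /\ dotv v v <= K ^+ 2].
have S0 : S !=set0 by exists 0; rewrite /S /= dotv0l lexx sqr_ge0.
have cS : {within S, continuous q} by apply: continuous_subspaceT => v; exact: cq.
have [c cS' cmax] := EVT_max_rV S0 (@compact_shell k 0 (K ^+ 2)) cS.
exists c; first by move: cS'; rewrite inE /S /= => -[].
by move=> t ht; apply: cmax; rewrite inE /S /= dotv_ge0.
Qed.

Lemma deriv_eps (psi : R -> R) t d :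
  (forall e, 0 < e -> exists2 dl, 0 < dl & forall s, `|s| <= dl ->
     `|psi (t + s) - psi t - s * d| <= e * `|s|) -> is_derive t 1 psi d.
Proof.
move=> h.
have hc : (fun h : R => h^-1 *: ((psi \o shift t) (h *: 1) - psi t)) @ 0^' --> d.
  apply/cvgrPdist_le => e e0.
  have [dl dl0 hdl] := h e e0.
  exists dl => // s /= sb sn0.
  rewrite sub0r normrN in sb.
  have := hdl s (ltW sb).
  rewrite -[_ *: 1]/(_ * 1) mulr1 (addrC s t) -[_ *: _]/(_ * _).
  have e1 : d - s^-1 * (psi (t + s) - psi t) = - s^-1 * (psi (t + s) - psi t - s * d).
    by field.
  rewrite e1 normrM normrN normfV => hh.
  by rewrite mulrC ler_pdivrMr ?normr_gt0.
apply: DeriveDef; first by apply/cvg_ex; exists d.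
exact: cvg_lim hc.
Qed.

End Top.

Section Taylor.
Variable R : realType.

Lemma line_deriv k (F : 'rV[R]_k -> R) (w v gw : 'rV[R]_k) (q p t : R) :
  has_grad F w gw ->
  is_derive t 1 (fun s : R => F (w - t *: v + s *: v) - s * q - s ^+ 2 * p)
     (dotv v gw - q - 2 * t * p).
Proof.
move=> hg; apply: deriv_eps => e e0.
have ev1 : 0 < enorm v + 1 by rewrite ltr_wpDl ?enorm_ge0.
have p1 : 0 < `|p| + 1 by rewrite ltr_wpDl.
have e1p : 0 < e / 2 / (enorm v + 1) by rewrite !divr_gt0.
have [dl dl0 hdl] := hg _ e1p.
exists (Num.min (dl / (enorm v + 1)) (e / 2 / (`|p| + 1))).
  by rewrite lt_min !divr_gt0.
move=> s; rewrite le_min => /andP[hs hs2].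
have hsv : enorm (s *: v) <= dl.
  rewrite enormZ; move: hs; rewrite ler_pdivlMr // => hs.
  apply: le_trans hs; rewrite ler_wpM2l //; lra.
have e2 : w - t *: v + (t + s) *: v = w + s *: v by rewrite scalerDl addrA subrK.
have e3 : w - t *: v + t *: v = w by rewrite subrK.
rewrite e2 e3.
have := hdl (w + s *: v); rewrite addrC addKr => /(_ hsv).
rewrite dotvZl => hh.
have -> : F (w + s *: v) - (t + s) * q - (t + s) ^+ 2 * p - (F w - t * q - t ^+ 2 * p)
     - s * (dotv v gw - q - 2 * t * p)
   = (F (w + s *: v) - F w - s * dotv v gw) - s * (s * p) by ring.
apply: le_trans (ler_normB _ _) _.
have h1 : e / 2 / (enorm v + 1) * enorm (s *: v) <= e / 2 * `|s|.
  rewrite enormZ.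
  apply: (@le_trans _ _ (e / 2 / (enorm v + 1) * (`|s| * (enorm v + 1)))).
    apply: ler_wpM2l; first by rewrite ltW.
    by apply: ler_wpM2l => //; rewrite lerDl.
  have -> : e / 2 / (enorm v + 1) * (`|s| * (enorm v + 1)) = e / 2 * `|s|.
    by field; rewrite gt_eqF.
  by [].
have h2 : `|s * (s * p)| <= e / 2 * `|s|.
  rewrite normrM [e / 2 * _]mulrC; apply: ler_wpM2l => //; rewrite normrM.
  move: hs2; rewrite ler_pdivlMr // => hs2.
  apply: le_trans (_ : `|s| * (`|p| + 1) <= _) => //.
  by rewrite ler_wpM2l // lerDl.
have := le_trans hh h1; lra.
Qed.


Lemma taylor2 k (F : 'rV[R]_k -> R) z g H : twice_diff_at F z g H ->
  forall e, 0 < e -> exists2 dl, 0 < dl & forall v, enorm v <= dl ->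
   `|F (z + v) - F z - dotv v g - qform H v / 2| <= e * dotv v v.
Proof.
case=> G [r r0 [hg [Gz hH]]] e e0.
have [d1 d10 hd1] := hH e e0.
exists (Num.min d1 (r / 2)); first by rewrite lt_min d10 divr_gt0.
move=> v; rewrite le_min => /andP[hv1 hv2].
set q := dotv v g; set p := qform H v / 2.
set phi := fun s : R => F (z + s *: v) - s * q - s ^+ 2 * p.
have hd : forall t : R, 0 <= t -> t <= 1 ->
    is_derive t 1 phi (dotv v (G (z + t *: v)) - q - 2 * t * p).
  move=> t t0 t1.
  have hw : enorm ((z + t *: v) - z) < r.
    rewrite addrC addKr enormZ ger0_norm //.
    apply: (@le_lt_trans _ _ (enorm v)); first by rewrite ler_piMl ?enorm_ge0.
    apply: le_lt_trans hv2 _; rewrite ltr_pdivrMr //; lra.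
  have := line_deriv v q p t (hg _ hw).
  have -> : (fun s => F (z + t *: v - t *: v + s *: v) - s * q - s ^+ 2 * p) = phi.
    by apply: funext => s; rewrite addrK.
  done.
have cphi : {within `[0, 1], continuous phi}.
  apply: derivable_within_continuous => x; rewrite in_itv /= => /andP[x0 x1].
  by case: (hd x x0 x1).
have hd' : forall x : R, x \in `]0, 1[%R -> is_derive x 1 phi (dotv v (G (z + x *: v)) - q - 2 * x * p).
  by move=> x; rewrite in_itv /= => /andP[x0 x1]; apply: hd; apply: ltW.
have [c hc hmvt] := MVT_segment ler01 hd' cphi.
move: hc; rewrite in_itv /= => /andP[c0 c1].
have ephi : phi 1 - phi 0 = F (z + v) - F z - q - p.
  by rewrite /phi scale1r scale0r addr0 expr1n expr0n /=; ring.
rewrite -ephi hmvt subr0 mulr1.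
have -> : dotv v (G (z + c *: v)) - q - 2 * c * p
    = dotv v (G (z + c *: v) - G z - (z + c *: v - z) *m H).
  have ezc : z + c *: v - z = c *: v by rewrite addrC addKr.
  rewrite ezc !dotvBr Gz /q /p qform_dot (dotvC (v *m H)) -scalemxAl dotvZr.
  by field.
have hcv : enorm (z + c *: v - z) = c * enorm v by rewrite addrC addKr enormZ ger0_norm.
apply: le_trans (CS _ _) _.
have hb : enorm (z + c *: v - z) <= d1.
  by rewrite hcv; apply: le_trans hv1; rewrite ler_piMl ?enorm_ge0.
apply: le_trans (_ : enorm v * (e * enorm (z + c *: v - z)) <= _).
  by apply: ler_wpM2l; [exact: enorm_ge0 | exact: hd1].
rewrite hcv -enorm_sq.
have := enorm_ge0 v => hv0.
have : 0 <= e * enorm v * enorm v * (1 - c).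
  apply: mulr_ge0; [apply: mulr_ge0; [apply: mulr_ge0; [exact: ltW | exact: hv0] | exact: hv0] | by rewrite subr_ge0].
nra.
Qed.

End Taylor.

Section Aux.
Variable R : realType.

Definition bil p q (a : 'rV[R]_p) (M : 'M[R]_(p, q)) (b : 'rV[R]_q) : R :=
  (a *m M *m b^T) ord0 ord0.

Lemma tr11 (M : 'M[R]_1) : M^T = M.
Proof. by apply/matrixP => i j; rewrite !ord1 mxE. Qed.

Lemma bilT p q (a : 'rV[R]_p) M (b : 'rV[R]_q) : bil a M b = bil b M^T a.
Proof. by rewrite /bil -[a *m M *m b^T]tr11 !trmx_mul trmxK mulmxA. Qed.

Lemma bilDl p q (a c : 'rV[R]_p) M (b : 'rV[R]_q) : bil (a + c) M b = bil a M b + bil c M b.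
Proof. by rewrite /bil !mulmxDl entryD. Qed.

Lemma bilDr p q (a : 'rV[R]_p) M (b c : 'rV[R]_q) : bil a M (b + c) = bil a M b + bil a M c.
Proof. by rewrite /bil linearD /= mulmxDr entryD. Qed.

Lemma bilDm p q (a : 'rV[R]_p) M N (b : 'rV[R]_q) : bil a (M + N) b = bil a M b + bil a N b.
Proof. by rewrite /bil mulmxDr mulmxDl entryD. Qed.

Lemma bilNl p q (a : 'rV[R]_p) M (b : 'rV[R]_q) : bil (- a) M b = - bil a M b.
Proof. by rewrite /bil !mulNmx mxE. Qed.

Lemma qform_bil k (A : 'M[R]_k) v : qform A v = bil v A v.
Proof. by []. Qed.

Lemma qformT k (A : 'M[R]_k) v : qform A^T v = qform A v.
Proof. by rewrite !qform_bil bilT trmxK. Qed.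

Lemma qform_blockE n m (H : 'M[R]_(n + m)) u h :
  qform H (row_mx u h) = qform (ulsubmx H) u + bil u (ursubmx H + (dlsubmx H)^T) h
    + qform (drsubmx H) h.
Proof.
rewrite qform_block bilDm -!/(bil _ _ _) (bilT h (dlsubmx H)).
rewrite /qform -!/(bil _ _ _); ring.
Qed.

Lemma qformD k (D : 'M[R]_k) a b :
  qform D (a + b) = qform D a + qform D b + bil a (D + D^T) b.
Proof.
rewrite !qform_bil bilDl !bilDr bilDm (bilT b D a); ring.
Qed.

Lemma ballmax_ge n m (f : 'rV[R]_n -> 'rV[R]_m -> R) x c e y :
  max_attained f -> 0 <= e -> cball c e y -> f x y <= ballmax f x c e.
Proof.
move=> hm e0 hy; have [y0 hy0 hmax] := hm x c e e0.
apply: sup_upper_bound; last by exists y.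
split; first by exists (f x y); exists y.
by exists (f x y0) => _ [z hz <-]; exact: hmax.
Qed.

Lemma ballmax_att n m (f : 'rV[R]_n -> 'rV[R]_m -> R) x c e :
  max_attained f -> 0 <= e -> exists2 y, cball c e y & ballmax f x c e = f x y.
Proof.
move=> hm e0; have [y0 hy0 hmax] := hm x c e e0.
exists y0 => //; apply/eqP; rewrite eq_le; apply/andP; split.
  by apply: ge_sup; [exists (f x y0); exists y0 | move=> _ [z hz <-]; exact: hmax].
exact: ballmax_ge.
Qed.

Lemma zero_small k (a : 'rV[R]_k) :
  (forall e, 0 < e -> dotv a a <= e * (enorm a + 1)) -> a = 0.
Proof.
move=> h; apply: enorm_eq0; apply/eqP; apply/negPn/negP => hn.
have E0 : 0 < enorm a by rewrite lt_def hn enorm_ge0.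
have e0 : 0 < enorm a ^+ 2 / (2 * (enorm a + 1)).
  by rewrite divr_gt0 ?exprn_gt0 // mulr_gt0 // ltr_wpDl ?enorm_ge0.
have := h _ e0; rewrite -enorm_sq.
have -> : enorm a ^+ 2 / (2 * (enorm a + 1)) * (enorm a + 1) = enorm a ^+ 2 / 2.
  by field; rewrite gt_eqF // ltr_wpDl ?enorm_ge0.
have : 0 < enorm a ^+ 2 by rewrite exprn_gt0.
lra.
Qed.

Lemma le0_small (a b : R) : 0 <= b -> (forall e, 0 < e -> a <= e * b) -> a <= 0.
Proof.
move=> b0 h; rewrite leNgt; apply/negP => a0.
have e0 : 0 < a / (2 * (b + 1)) by rewrite divr_gt0 // mulr_gt0 // ltr_wpDl.
have := h _ e0.
have : a / (2 * (b + 1)) * b <= a / 2.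
  rewrite -subr_ge0.
  have -> : a / 2 - a / (2 * (b + 1)) * b = a / (2 * (b + 1)).
    by field; rewrite gt_eqF // ltr_wpDl.
  exact: ltW.
lra.
Qed.

Lemma F_row_mx n m (f : 'rV[R]_n -> 'rV[R]_m -> R) xb yb u w :
  (fun z : 'rV[R]_(n + m) => f (lsubmx z) (rsubmx z)) (row_mx xb yb + row_mx u w)
  = f (xb + u) (yb + w).
Proof. by rewrite /= add_row_mx row_mxKl row_mxKr. Qed.

End Aux.

Section PartB.
Variable R : realType.

Lemma zvz k (z v : 'rV[R]_k) : z + v - z = v.
Proof. by rewrite addrAC subrr add0r. Qed.

Lemma partB1 n m (f : 'rV[R]_n -> 'rV[R]_m -> R) xb yb g H :
  max_attained f ->
  twice_diff_at (fun z : 'rV[R]_(n + m) => f (lsubmx z) (rsubmx z)) (row_mx xb yb) g H ->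
  calm_local_minimax f xb yb -> g = 0.
Proof.
move=> hm htd [d0 d00 [tau [[t0 tnn tlim] [ka [d1 [ka0 d10] hcalm]] hmm]]].
set F := fun z : 'rV[R]_(n + m) => f (lsubmx z) (rsubmx z).
set z0 := row_mx xb yb.
have hF0 : F z0 = f xb yb by rewrite /F /z0 row_mxKl row_mxKr.
have hFe : forall u w, F (z0 + row_mx u w) = f (xb + u) (yb + w) := F_row_mx f xb yb.
have hg1 : has_grad F z0 g.
  by case: htd => G [r r0 [hg [Gz _]]]; rewrite -Gz; apply: hg; rewrite subrr enorm0.
have hyb : forall w, enorm w <= d0 -> f xb (yb + w) <= f xb yb.
  move=> w hw; have := hmm d0 d00 (lexx _) xb (yb + w).
  by rewrite /cball /= subrr enorm0 addrAC subrr add0r => /(_ (ltW d00) hw) [].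
have hmin : forall d x, 0 < d -> d <= d0 -> enorm (x - xb) <= d ->
    f xb yb <= ballmax f x yb (tau d).
  move=> d x d0' dd hx; have := hmm d d0' dd x yb.
  by rewrite /cball /= subrr enorm0 => /(_ hx (ltW d0')) [].
have hgs : g = row_mx (lsubmx g) (rsubmx g) by rewrite hsubmxK.
set gx := lsubmx g in hgs; set gy := rsubmx g in hgs.
have gy0 : gy = 0.
  apply: zero_small => e e0.
  have [dl dl0 hdl] := hg1 e e0.
  have ey1 : 0 < enorm gy + 1 by rewrite ltr_wpDl ?enorm_ge0.
  have md0 : 0 < Num.min dl d0 by rewrite lt_min dl0 d00.
  set t := Num.min dl d0 / (enorm gy + 1).
  have t0' : 0 < t by rewrite divr_gt0.
  have ht : t * enorm gy <= Num.min dl d0.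
    apply: (@le_trans _ _ (t * (enorm gy + 1))); first by rewrite ler_pM2l // lerDl.
    by rewrite /t divfK ?gt_eqF.
  move: ht; rewrite le_min => /andP[ht1 ht2].
  set v := row_mx (0 : 'rV[R]_n) (t *: gy).
  have hv : enorm v = t * enorm gy by rewrite enorm_row0 enormZ gtr0_norm.
  have := hdl (z0 + v); rewrite zvz hv => /(_ ht1).
  rewrite /v hFe addr0 hF0 hgs dotv_row_mx dotv0l add0r dotvZl.
  have := hyb (t *: gy); rewrite enormZ gtr0_norm // => /(_ ht2) hle habs.
  have h1 : t * dotv gy gy <= t * (e * enorm gy).
    move: habs => /ler_normlP [habs _]; rewrite mulrCA; lra.
  move: h1; rewrite ler_pM2l // => h1; apply: le_trans h1 _.
  by rewrite ler_pM2l // lerDl.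
rewrite hgs gy0 -(row_mx0 R 1 n m); congr row_mx.
apply: zero_small => e e0.
have ka1 : 0 < 1 + ka by rewrite ltr_wpDl ?ltW.
have [dl dl0 hdl] := hg1 (e / (1 + ka)) (divr_gt0 e0 ka1).
have ex1 : 0 < enorm gx + 1 by rewrite ltr_wpDl ?enorm_ge0.
set d := Num.min (Num.min d0 d1) (dl / (1 + ka)).
have d0' : 0 < d by rewrite !lt_min d00 d10 divr_gt0.
have hd0 : d <= d0 by rewrite /d !ge_min lexx.
have hd1 : d <= d1 by rewrite /d !ge_min lexx orbT.
have hdl' : (1 + ka) * d <= dl by rewrite mulrC -ler_pdivlMr // /d ge_min lexx orbT.
set t := d / (enorm gx + 1).
have t0' : 0 < t by rewrite divr_gt0.
have ht : t * enorm gx <= d.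
  apply: (@le_trans _ _ (t * (enorm gx + 1))); first by rewrite ler_pM2l // lerDl.
  by rewrite /t divfK ?gt_eqF.
set x := xb + t *: - gx.
have hx : enorm (x - xb) <= d by rewrite /x addrAC subrr add0r enormZ enormN gtr0_norm.
have [ys hys hbm] := ballmax_att x yb (hm) (tnn d (ltW d0')).
have hle := hmin d x d0' hd0 hx; rewrite hbm in hle.
have htau : tau d <= ka * d by apply: hcalm => //; exact: ltW.
set v := row_mx (t *: - gx) (ys - yb).
have hv : enorm v <= (1 + ka) * d.
  apply: le_trans (enorm_row_mx _ _) _; rewrite enormZ enormN gtr0_norm // mulrDl mul1r.
  apply: lerD => //; apply: le_trans htau; exact: hys.
have := hdl (z0 + v); rewrite zvz => /(_ (le_trans hv hdl')).
rewrite /v hFe hF0 hgs gy0 dotv_row_mx dotv0r addr0 dotvZl dotvNl.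
rewrite (_ : yb + (ys - yb) = ys); last by rewrite addrC subrK.
move=> /ler_normlP [_ habs].
have h2 : e / (1 + ka) * enorm v <= e * d.
  apply: (@le_trans _ _ (e / (1 + ka) * ((1 + ka) * d))).
    by apply: ler_wpM2l => //; rewrite ltW // divr_gt0.
  by rewrite mulrA divfK ?gt_eqF.
rewrite -/x -/v mulrN opprK in habs.
have h3 : t * dotv gx gx <= e * d by lra.
have e4 : t * (e * (enorm gx + 1)) = e * d by rewrite /t; field; rewrite gt_eqF.
rewrite -e4 in h3.
by move: h3; rewrite ler_pM2l.
Qed.

End PartB.

Section PartB2.
Variable R : realType.

Lemma cont_qform_comp k l (A : 'M[R]_k) (phi : 'rV[R]_l -> 'rV[R]_k) :
  (forall i, continuous (fun h => phi h ord0 i)) -> continuous (fun h => qform A (phi h)).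
Proof.
move=> hphi.
have -> : (fun h => qform A (phi h)) =
    fun h => \sum_i (\sum_j phi h ord0 j * A j i) * phi h ord0 i.
  by apply: funext => w; rewrite qform_dot /dotv; apply: eq_bigr => i _; rewrite mxE.
apply: cont_sum => i v; apply: continuousM; last exact: hphi.
by apply: cont_sum => j w; apply: continuousM; [exact: hphi | exact: cst_continuous].
Qed.

Lemma cont_row_coord n m (u : 'rV[R]_n) i :
  continuous (fun h : 'rV[R]_m => row_mx u h ord0 i).
Proof.
have [j ->|j ->] := split_ordP i.
  have -> : (fun h : 'rV[R]_m => row_mx u h ord0 (lshift m j)) = fun=> u ord0 j.
    by apply: funext => h; rewrite row_mxEl.
  by move=> h; exact: cst_continuous.
have -> : (fun h : 'rV[R]_m => row_mx u h ord0 (rshift n j)) = fun h => h ord0 j.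
  by apply: funext => h; rewrite row_mxEr.
exact: coord_continuous.
Qed.

Lemma partB23 n m (f : 'rV[R]_n -> 'rV[R]_m -> R) xb yb H :
  max_attained f ->
  twice_diff_at (fun z : 'rV[R]_(n + m) => f (lsubmx z) (rsubmx z)) (row_mx xb yb) 0 H ->
  calm_local_minimax f xb yb ->
  negsemidef (drsubmx H) /\ (forall u, exists h, 0 <= qform H (row_mx u h)).
Proof.
move=> hm htd [d0 d00 [tau [[t0 tnn tlim] [ka [d1 [ka0 d10] hcalm]] hmm]]].
set F := fun z : 'rV[R]_(n + m) => f (lsubmx z) (rsubmx z).
set z0 := row_mx xb yb.
have hF0 : F z0 = f xb yb by rewrite /F /z0 row_mxKl row_mxKr.
have hFe : forall u w, F (z0 + row_mx u w) = f (xb + u) (yb + w) := F_row_mx f xb yb.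
have hT := taylor2 htd.
have hyb : forall w, enorm w <= d0 -> f xb (yb + w) <= f xb yb.
  move=> w hw; have := hmm d0 d00 (lexx _) xb (yb + w).
  by rewrite /cball /= subrr enorm0 addrAC subrr add0r => /(_ (ltW d00) hw) [].
have hmin : forall d x, 0 < d -> d <= d0 -> enorm (x - xb) <= d ->
    f xb yb <= ballmax f x yb (tau d).
  move=> d x d0' dd hx; have := hmm d d0' dd x yb.
  by rewrite /cball /= subrr enorm0 => /(_ hx (ltW d0')) [].
split.
  move=> w; apply: (le0_small (dotv_ge0 w)) => e e0.
  have [dl dl0 hdl] := hT (e / 2) (divr_gt0 e0 (ltr0Sn _ 1)).
  have ew1 : 0 < enorm w + 1 by rewrite ltr_wpDl ?enorm_ge0.
  have md0 : 0 < Num.min dl d0 by rewrite lt_min dl0 d00.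
  set t := Num.min dl d0 / (enorm w + 1).
  have t0' : 0 < t by rewrite divr_gt0.
  have ht : t * enorm w <= Num.min dl d0.
    apply: (@le_trans _ _ (t * (enorm w + 1))); first by rewrite ler_pM2l // lerDl.
    by rewrite /t divfK ?gt_eqF.
  move: ht; rewrite le_min => /andP[ht1 ht2].
  set v := t *: row_mx (0 : 'rV[R]_n) w.
  have hv : enorm v = t * enorm w by rewrite /v enormZ enorm_row0 gtr0_norm.
  have := hdl v; rewrite hv => /(_ ht1).
  rewrite /v scale_row_mx scaler0 add_row_mx !row_mxKl !row_mxKr addr0 dotv0r subr0 qform_row0 qformZ.
  rewrite dotv_row_mx dotv0l add0r dotvZl dotvZr.
  have := hyb (t *: w); rewrite enormZ gtr0_norm // => /(_ ht2) hle /ler_normlP [habs _].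
  have h1 : t ^+ 2 * qform (drsubmx H) w <= t ^+ 2 * (e * dotv w w).
    have : t * (t * dotv w w) = t ^+ 2 * dotv w w by rewrite expr2 mulrA.
    nra.
  by move: h1; rewrite ler_pM2l // exprn_gt0.
move=> u.
set K := ka * (enorm u + 1).
have K0 : 0 <= K by apply: mulr_ge0; [exact: ltW | rewrite addr_ge0 ?enorm_ge0].
have [c hc cmax] := max_ball K (cont_qform_comp (A:=H) (fun i => cont_row_coord (m:=m) (u:=u) (i:=i))).
exists c; rewrite -[X in X <= _]opprK -[qform _ _]opprK lerN2 oppr0.
apply: (le0_small ler01) => e e0.
set Dn := dotv u u + K ^+ 2.
have Dn0 : 0 <= Dn by rewrite addr_ge0 ?dotv_ge0 ?sqr_ge0.
have e'0 : 0 < e / (2 * (Dn + 1)) by rewrite divr_gt0 // mulr_gt0 // ltr_wpDl.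
have [dl dl0 hdl] := hT _ e'0.
have ka1 : 0 < 1 + ka by rewrite ltr_wpDl ?ltW.
have eu1 : 0 < enorm u + 1 by rewrite ltr_wpDl ?enorm_ge0.
set d := Num.min (Num.min d0 d1) (dl / (1 + ka)).
have d0' : 0 < d by rewrite !lt_min d00 d10 divr_gt0.
have hd0 : d <= d0 by rewrite /d !ge_min lexx.
have hd1 : d <= d1 by rewrite /d !ge_min lexx orbT.
have hdl' : (1 + ka) * d <= dl by rewrite mulrC -ler_pdivlMr // /d ge_min lexx orbT.
set t := d / (enorm u + 1).
have t0' : 0 < t by rewrite divr_gt0.
have htd' : t * (enorm u + 1) = d by rewrite /t divfK ?gt_eqF.
have ht : t * enorm u <= d by rewrite -htd' ler_pM2l // lerDl.
set x := xb + t *: u.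
have hx : enorm (x - xb) <= d by rewrite /x addrAC subrr add0r enormZ gtr0_norm.
have [ys hys hbm] := ballmax_att x yb hm (tnn d (ltW d0')).
have hle := hmin d x d0' hd0 hx; rewrite hbm in hle.
have htau : tau d <= ka * d by apply: hcalm => //; exact: ltW.
set h := t^-1 *: (ys - yb).
have hys' : ys - yb = t *: h by rewrite /h scalerA divff ?gt_eqF // scale1r.
have hh : enorm h <= K.
  have hE : enorm (ys - yb) <= ka * (t * (enorm u + 1)) by rewrite htd'; apply: le_trans htau; exact: hys.
  rewrite /h enormZ gtr0_norm ?invr_gt0 // /K.
  apply: (@le_trans _ _ (t^-1 * (ka * (t * (enorm u + 1))))).
    by apply: ler_wpM2l => //; rewrite invr_ge0 ltW.
  have -> : t^-1 * (ka * (t * (enorm u + 1))) = ka * (enorm u + 1) by field; rewrite gt_eqF.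
  by [].
have hhK : dotv h h <= K ^+ 2.
  by rewrite -enorm_sq; have := enorm_ge0 h; nra.
set v := t *: row_mx u h.
have hv : enorm v <= dl.
  apply: le_trans hdl'; rewrite /v scale_row_mx -hys'.
  apply: le_trans (enorm_row_mx _ _) _; rewrite enormZ gtr0_norm // mulrDl mul1r.
  apply: lerD => //; apply: le_trans htau; exact: hys.
have := hdl v hv.
rewrite /v scale_row_mx add_row_mx !row_mxKl !row_mxKr -hys' -/x (_ : yb + (ys - yb) = ys); last by rewrite addrC subrK.
rewrite hys' -scale_row_mx dotv0r subr0 qformZ dotvZl dotvZr dotv_row_mx.
move=> /ler_normlP [_ habs].
have hD : dotv u u + dotv h h <= Dn by rewrite /Dn lerD2l.
have ht2 : 0 < t ^+ 2 by rewrite exprn_gt0.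
have hq : - qform H (row_mx u h) <= e.
  have h5 : e / (2 * (Dn + 1)) * (dotv u u + dotv h h) <= e / 2.
    apply: (@le_trans _ _ (e / (2 * (Dn + 1)) * (Dn + 1))).
      by apply: ler_wpM2l; [rewrite ltW | lra].
    have Dn1 : Dn + 1 != 0 by rewrite gt_eqF // ltr_wpDl.
    have -> : e / (2 * (Dn + 1)) * (Dn + 1) = e / 2 by field.
    by [].
  have h6 : t ^+ 2 * (- qform H (row_mx u h)) <= t ^+ 2 * e.
    have : t * (t * (dotv u u + dotv h h)) = t ^+ 2 * (dotv u u + dotv h h) by rewrite expr2 mulrA.
    nra.
  by move: h6; rewrite ler_pM2l.
rewrite mulr1; apply: le_trans hq; rewrite lerN2; exact: cmax.
Qed.

End PartB2.

Section PartA.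
Variable R : realType.

Lemma entryN p q (A : 'M[R]_(p, q)) i j : (- A) i j = - A i j.
Proof. by rewrite mxE. Qed.

Lemma partA n m (f : 'rV[R]_n -> 'rV[R]_m -> R) xb yb H :
  max_attained f ->
  twice_diff_at (fun z : 'rV[R]_(n + m) => f (lsubmx z) (rsubmx z)) (row_mx xb yb) 0 H ->
  negdef (drsubmx H) ->
  (forall u : 'rV[R]_n, u != 0 -> exists h : 'rV[R]_m, 0 < qform H (row_mx u h)) ->
  calm_local_minimax f xb yb.
Proof.
move=> hm htd hD hu.
set D := drsubmx H.
set Ds := D + D^T.
set E := ursubmx H + (dlsubmx H)^T.
have hDs : forall w, qform Ds w = 2 * qform D w.
  by move=> w; rewrite qform_bil bilDm -!qform_bil qformT; ring.
have qDle : forall w, qform D w <= 0.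
  move=> w; have [->|wn0] := eqVneq w 0; first by rewrite qform0.
  exact: ltW (hD w wn0).
have uDs : Ds \in unitmx.
  rewrite unitmxE unitfE; apply/negP => /det0P [w wn0 hw].
  have h0 : qform Ds w = 0 by rewrite qform_dot hw dotv0l.
  have := hD w wn0; rewrite hDs in h0; lra.
set M := E *m invmx Ds.
set hs := fun u : 'rV[R]_n => - (u *m M).
have hsDs : forall u, hs u *m Ds = - (u *m E).
  by move=> u; rewrite /hs /M mulNmx -!mulmxA mulVmx // mulmx1.
have dec : forall u w, qform H (row_mx u (hs u + w)) = qform H (row_mx u (hs u)) + qform D w.
  move=> u w; rewrite !qform_blockE bilDr qformD.
  have -> : bil (hs u) (D + D^T) w = - bil u E w.
    by rewrite /bil -/Ds hsDs mulNmx entryN.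
  rewrite -/D -/E; ring.
set N := row_mx (1%:M : 'M[R]_n) (- M).
set P := N *m H *m N^T.
have hS : forall u, qform H (row_mx u (hs u)) = qform P u.
  by move=> u; rewrite /P -qform_mul /N mul_mx_row mulmx1 mulmxN.
have Ppos : forall u, u != 0 -> 0 < qform P u.
  move=> u un0; have [h hh] := hu u un0.
  rewrite -(_ : hs u + (h - hs u) = h) in hh; last by rewrite addrC subrK.
  rewrite dec hS in hh; have := qDle (h - hs u); lra.
have [cS cS0 hcS] := coercive Ppos.
have Dneg : forall w, w != 0 -> 0 < qform (- D) w.
  by move=> w wn0; rewrite qformN oppr_gt0; exact: hD.
have [cD cD0 hcD] := coercive Dneg.
have [L L0 hL] := lin_bound M.
have hT := taylor2 htd.
have [dl1 dl10 hdl1] := hT (cD / 2) (divr_gt0 cD0 (ltr0Sn _ 1)).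
have e2p : 0 < cS / (2 * (1 + L ^+ 2)).
  by apply: divr_gt0 => //; apply: mulr_gt0 => //; have := sqr_ge0 L; lra.
have [dl2 dl20 hdl2] := hT _ e2p.
set L1 := 1 + L.
have L10 : 0 < L1 by rewrite /L1; lra.
exists (Num.min dl1 (dl2 / L1)); first by rewrite lt_min dl10 divr_gt0.
exists (fun d => L1 * d); split.
- split; first by rewrite mulr0.
    by move=> d d0 /=; apply: mulr_ge0 => //; exact: ltW.
  move=> e e0; exists (e / L1); first by rewrite divr_gt0.
  by move=> d _ hd /=; rewrite mulrC -ler_pdivlMr.
- by exists L1; exists 1 => // d _ _.
move=> d dpos; rewrite le_min => /andP[hd1 hd2] x y hx hy.
rewrite /cball /= in hx hy.
split.
  set w := y - yb.
  have := hdl1 (row_mx 0 w); rewrite enorm_row0 => /(_ (le_trans hy hd1)).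
  rewrite add_row_mx !row_mxKl !row_mxKr addr0 /w (_ : yb + (y - yb) = y); last by rewrite addrC subrK.
  rewrite dotv0r subr0.
  rewrite qform_row0 -/D /dotv_row_mx dotv_row_mx dotv0l add0r => /ler_normlP [_ habs].
  have := hcD (y - yb); rewrite qformN.
  have := dotv_ge0 (y - yb); nra.
set u := x - xb.
have hsu : enorm (hs u) <= L * enorm u by rewrite /hs enormN; exact: hL.
have Lu : L * enorm u <= L * d by apply: ler_wpM2l.
have hball : cball yb (L1 * d) (yb + hs u).
  rewrite /cball /= addrAC subrr add0r; apply: (le_trans hsu); apply: le_trans Lu _.
  by rewrite /L1 mulrDl mul1r lerDr ltW.
apply: le_trans (ballmax_ge x hm (mulr_ge0 (ltW L10) (ltW dpos)) hball).
have hv : enorm (row_mx u (hs u)) <= dl2.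
  apply: le_trans (enorm_row_mx _ _) _.
  apply: (@le_trans _ _ (L1 * d)); first by rewrite /L1 mulrDl mul1r; apply: lerD; [exact: hx | exact: le_trans hsu Lu].
  by rewrite mulrC -ler_pdivlMr.
have := hdl2 _ hv.
rewrite add_row_mx !row_mxKl !row_mxKr /u (_ : xb + (x - xb) = x); last by rewrite addrC subrK.
rewrite dotv0r subr0 -/u hS.
rewrite dotv_row_mx => /ler_normlP [habs _].
have hdh : dotv (hs u) (hs u) <= L ^+ 2 * dotv u u.
  rewrite -!enorm_sq.
  have h0 := enorm_ge0 (hs u).
  have : enorm (hs u) * enorm (hs u) <= (L * enorm u) * (L * enorm u) by apply: ler_pM.
  by rewrite !expr2 mulrACA.
have h1 := hcS u.
have h2 : cS / (2 * (1 + L ^+ 2)) * (dotv u u + dotv (hs u) (hs u)) <= cS / 2 * dotv u u.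
  apply: (@le_trans _ _ (cS / (2 * (1 + L ^+ 2)) * ((1 + L ^+ 2) * dotv u u))).
    by apply: ler_wpM2l; [exact: ltW | rewrite mulrDl mul1r; lra].
  have hL2 : 1 + L ^+ 2 != 0 by rewrite gt_eqF //; have := sqr_ge0 L; lra.
  have -> : cS / (2 * (1 + L ^+ 2)) * ((1 + L ^+ 2) * dotv u u) = cS / 2 * dotv u u by field.
  by [].
lra.
Qed.

End PartA.


Unset Implicit Arguments.
Local Close Scope classical_set_scope.

Theorem mainTheorem15 (R : realType) (n m : nat)
  (f : 'rV[R]_n -> 'rV[R]_m -> R) (xb : 'rV[R]_n) (yb : 'rV[R]_m)
  (g : 'rV[R]_(n + m)) (H : 'M[R]_(n + m)) :
  max_attained f ->
  twice_diff_at (fun z : 'rV[R]_(n + m) => f (lsubmx z) (rsubmx z))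
    (row_mx xb yb) g H ->
  ((g = 0 /\ negdef (drsubmx H) /\
     (forall u : 'rV[R]_n, u != 0 -> exists h : 'rV[R]_m, 0 < qform H (row_mx u h)))
     -> calm_local_minimax f xb yb)
  /\
  (calm_local_minimax f xb yb ->
     g = 0 /\ negsemidef (drsubmx H) /\
     (forall u : 'rV[R]_n, exists h : 'rV[R]_m, 0 <= qform H (row_mx u h))).
Proof.
move=> hm htd; split.
  move=> [g0 [hD hu]]; rewrite g0 in htd; exact: (partA hm htd hD hu).
move=> hc; have g0 := partB1 hm htd hc; split => //.
rewrite g0 in htd; exact: (partB23 hm htd hc).
Qed.
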